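(* For every positive integer $s$ and every positive integer $l$, the vector of polynomials $I^{[lp^s-1]}_{p^s}(z)\in\mathbb Z[z]^n$ is a solution of the KZ system modulo $p^s$.
   Context: Let $p$ be an odd prime, $g\ge1$, $n=2g+1$, with $p>n$. Write $z=(z_1,\dots,z_n)$. For $1\le i\ne j\le n$ let $\Omega_{ij}$ be the $n\times n$ matrix whose $(i,i)$ and $(j,j)$ entries are $-1$, whose $(i,j)$ and $(j,i)$ entries are $1$, and all of whose other entries are $0$. The KZ system is the system for a column vector $I=(I_1,\dots,I_n)$ of functions of $z$: $\frac{\partial I}{\partial z_i}=\frac12\sum_{j\ne i}\frac{\Omega_{ij}}{z_i-z_j}\,I$ for $i=1,\dots,n$, together with $I_1+\dots+I_n=0$. For a positive integer $s$ let $\pi_s$ denote reduction modulo $p^s$ (on $\mathbb Z$, $\mathbb Z[z]$, $\mathbb Z[z]^n$). A vector $I(z)\in\mathbb Z[z]^n$ is a solution of the KZ system modulo $p^s$ if $\pi_s I\in(\mathbb Z/p^s\mathbb Z)[z]^n$ satisfies the KZ system (the differential equations being understood in $(\mathbb Z/p^s\mathbb Z)[z]$ after multiplying the $i$-th equation by $\prod_{j\ne i}(z_i-z_j)$). For a positive integer $r$ put $M_r=(p^r-1)/2$, $\Phi_{p^r}(x,z)=\prod_{i=1}^n(x-z_i)^{M_r}\in\mathbb Z[x,z]$, and expand $\Big(\frac{\Phi_{p^r}(x,z)}{x-z_1},\dots,\frac{\Phi_{p^r}(x,z)}{x-z_n}\Big)=\sum_i P^i_{p^r}(z)\,x^i$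 with $P^i_{p^r}(z)\in\mathbb Z[z]^n$. For a positive integer $l$ set $I^{[lp^r-1]}_{p^r}(z)=P^{lp^r-1}_{p^r}(z)$. *)

(* Defs.v *)
From HB Require Import structures.
From mathcomp Require Import all_boot all_order all_algebra.
From mathcomp Require Import mpoly.
Set Implicit Arguments.
Unset Strict Implicit.
Unset Printing Implicit Defensive.
Import GRing.Theory.
Local Open Scope ring_scope.

Definition Mr (p r : nat) : nat := ((p ^ r).-1)./2.

Definition Phi (n p r : nat) : {poly {mpoly int[n]}} :=
  \prod_(i < n) ('X - ('X_i)%:P) ^+ Mr p r.

(* Phi_{p^r}(x,z) / (x - z_j), written out as the exact quotient
   (M_r >= 1 since p^r >= 3). *)
Definition Phi_div (n p r : nat) (j : 'I_n) : {poly {mpoly int[n]}} :=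
  ('X - ('X_j)%:P) ^+ (Mr p r).-1 *
  \prod_(i < n | i != j) ('X - ('X_i)%:P) ^+ Mr p r.

Definition Pcoef (n p r i : nat) (j : 'I_n) : {mpoly int[n]} :=
  (Phi_div p r j)`_i.

Definition Ivec (n p r l : nat) : 'I_n -> {mpoly int[n]} :=
  fun j => Pcoef p r (l * p ^ r).-1 j.
Arguments Ivec : clear implicits.

Definition Omega (n : nat) (i j : 'I_n) : 'M[int]_n :=
  \matrix_(a < n, b < n)
    (if (a == b) then (if (a == i) || (a == j) then -1 else 0)
     else if ((a == i) && (b == j)) || ((a == j) && (b == i)) then 1 else 0).

Definition redmod (m : nat) (n : nat) (q : {mpoly int[n]}) : {mpoly 'Z_m[n]} :=
  map_mpoly (fun c : int => (c%:~R : 'Z_m)) q.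

(* I is a solution of the KZ system modulo m: the reduction pi I satisfies
   sum_k I_k = 0 and, for each i, the i-th equation multiplied by
   prod_{j<>i} (z_i - z_j):
   prod_{j<>i}(z_i-z_j) dI/dz_i
     = 1/2 sum_{j<>i} prod_{q<>i,j}(z_i - z_q) Omega_{ij} I. *)
Definition KZ_sol_mod (m n : nat) (I : 'I_n -> {mpoly int[n]}) : Prop :=
  let J := fun k => redmod m (I k) in
  (\sum_(k < n) J k = 0) /\
  forall i k : 'I_n,
    (\prod_(j < n | j != i) ('X_i - 'X_j)) * (J k)^`M(i) =
    (2%:R : 'Z_m)^-1 *:
      \sum_(j < n | j != i)
        (\prod_(q < n | (q != i) && (q != j)) ('X_i - 'X_q)) *
        \sum_(c < n) (((Omega i j) k c)%:~R : 'Z_m) *: J c.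

(* Main.v *)
Require Import Defs.

From HB Require Import structures.
From mathcomp Require Import all_boot all_order all_algebra.
From mathcomp Require Import mpoly.
From mathcomp Require Import ring.
Set Implicit Arguments.
Unset Strict Implicit.
Import GRing.Theory.
Local Open Scope ring_scope.

Section Deriv.
Variable R : comRingType.
Variable d : R -> R.
Hypothesis dD : forall x y, d (x + y) = d x + d y.
Hypothesis dM : forall x y, d (x * y) = d x * y + x * d y.

Lemma dr1 : d 1 = 0.
Proof. have := dM 1 1; rewrite !mul1r mulr1 => H.
by apply: (@addrI _ (d 1)); rewrite addr0 -H. Qed.

Lemma dr_seqprod (I : eqType) (s : seq I) (F : I -> R) :
  d (\prod_(x <- s) F x) = \sum_(j <- s) d (F j) * \prod_(x <- rem j s) F x.
Proof.
elim: s => [|x s IH]; first by rewrite !big_nil dr1.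
rewrite !big_cons dM IH /= eqxx; congr (_ + _).
rewrite mulr_sumr [LHS]big_seq [RHS]big_seq; apply: eq_bigr => j js.
case: eqP => [->|_]; last by rewrite big_cons; ring.
rewrite (perm_big _ (perm_to_rem js)) big_cons /=; ring.
Qed.

Lemma dr_prod n (P : pred 'I_n) (F : 'I_n -> R) :
  d (\prod_(a < n | P a) F a) =
  \sum_(j < n | P j) d (F j) * \prod_(a < n | P a && (a != j)) F a.
Proof.
rewrite -big_filter dr_seqprod big_filter; apply: eq_bigr => j _.
rewrite rem_filter ?filter_uniq ?index_enum_uniq // -filter_predI big_filter.
by congr (_ * _); apply: eq_bigl => a /=; rewrite andbC.
Qed.

Lemma dr_prod0 n (P : pred 'I_n) (F : 'I_n -> R) :
  (forall a, P a -> d (F a) = 0) -> d (\prod_(a < n | P a) F a) = 0.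
Proof. by move=> H; rewrite dr_prod big1 // => j /H ->; rewrite mul0r. Qed.

Lemma dr_exp x e : d (x ^+ e) = x ^+ e.-1 * d x *+ e.
Proof.
elim: e => [|e IH]; first by rewrite expr0 dr1 mulr0n.
rewrite exprS dM IH; case: e IH => [|e] IH /=; first by rewrite !expr0 mulr0n mulr0 addr0 mulr1n mul1r mulr1.
rewrite !exprS; ring.
Qed.
End Deriv.


From HB Require Import structures.
From mathcomp Require Import all_boot all_order all_algebra.
From mathcomp Require Import mpoly.
From mathcomp Require Import ring.
Set Implicit Arguments.
Unset Strict Implicit.
Import GRing.Theory.
Local Open Scope ring_scope.

Section Conc.
Variable K : comRingType.
Variable n : nat.
Local Notation A := {mpoly K[n]}.

Lemma mderivXi (i j : 'I_n) : ('X_j : A)^`M(i) = (i == j)%:R.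
Proof.
rewrite mderivX mnm1E eq_sym; case: eqP => [->|_] /=; last by rewrite scale0r.
have -> : (U_(j) - U_(j) = 0)%MM by apply/mnmP=> k; rewrite mnmBE subnn mnm0E.
by rewrite mpolyX0 scale1r.
Qed.

Definition L (a : 'I_n) : {poly A} := 'X - ('X_a)%:P.
Definition Di (i : 'I_n) (p : {poly A}) : {poly A} := map_poly (mderiv i) p.

Lemma DiD i p q : Di i (p + q) = Di i p + Di i q.
Proof. by rewrite /Di raddfD. Qed.

Lemma DiM i p q : Di i (p * q) = Di i p * q + p * Di i q.
Proof.
apply/polyP=> k; rewrite coefD. 
rewrite [in LHS]coef_map.
rewrite (coefM p q) (coefM (Di i p) q) (coefM p (Di i q)).
rewrite raddf_sum -big_split.
apply: eq_bigr => j _.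
by rewrite /Di !coef_map; apply: mderivM.
Qed.

Lemma DiL i a : Di i (L a) = - ((i == a)%:R)%:P.
Proof.
apply/polyP=> k. rewrite coef_map /L coefB coefX coefC coefN coefC.
case: k => [|[|k]]; rewrite /=.
- by rewrite sub0r mderivN mderivXi.
- by rewrite subr0 oppr0 (dr1 (mderivM i)).
- by rewrite subr0 oppr0 mderiv0.
Qed.

Lemma derivL a : deriv (L a) = 1.
Proof. by rewrite /L derivB derivX derivC subr0. Qed.

Definition T i (p : {poly A}) := Di i p + deriv p.
Lemma TD i p q : T i (p + q) = T i p + T i q.
Proof. rewrite /T DiD derivD; ring. Qed.
Lemma TM i p q : T i (p * q) = T i p * q + p * T i q.
Proof. rewrite /T DiM derivM; ring. Qed.

Lemma TL i a : T i (L a) = (i != a)%:R.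
Proof. by rewrite /T DiL derivL; case: eqP => _ /=; rewrite ?polyC1 ?addNr // polyC0 oppr0 add0r. Qed.


End Conc.


From HB Require Import structures.
From mathcomp Require Import all_boot all_order all_algebra.
From mathcomp Require Import ring.
Set Implicit Arguments.
Set Implicit Arguments.
Unset Strict Implicit.
Import GRing.Theory.
Local Open Scope ring_scope.

Section Gen.
Variable P : comRingType.
Variable n : nat.
Variable L : 'I_n -> P.
Variable M : nat.
Hypothesis M0 : (0 < M)%N.

Definition Psi k := L k ^+ M.-1 * \prod_(a < n | a != k) L a ^+ M.
Definition Rr i k := L i ^+ M.-1 * L k ^+ M.-1 *
  \prod_(a < n | (a != i) && (a != k)) L a ^+ M.

Lemma expM (x : P) : x ^+ M = x * x ^+ M.-1.
Proof. by rewrite -exprS prednK. Qed.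

Lemma Psi_split i k : k != i ->
  Psi k = L k ^+ M.-1 * (L i ^+ M * \prod_(a < n | (a != i) && (a != k)) L a ^+ M).
Proof.
move=> ki; rewrite /Psi (bigD1 i) 1?eq_sym //.
by rewrite (eq_bigl (fun a => (a != i) && (a != k))) // => a; rewrite andbC.
Qed.

Lemma PsiRk i k : k != i -> Psi k = L i * Rr i k.
Proof.
move=> ki; rewrite (Psi_split ki) /Rr (expM (L i)); ring.
Qed.

Lemma PsiRi i k : k != i -> Psi i = L k * Rr i k.
Proof.
move=> ki; rewrite /Psi (bigD1 k) //= /Rr (expM (L k)); ring.
Qed.

Lemma Rr_sym i k : Rr i k = Rr k i.
Proof.
rewrite /Rr (eq_bigl (fun a => (a != k) && (a != i))); first by ring.
by move=> a; rewrite andbC.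
Qed.

Variable d : P -> P.
Hypothesis dD : forall x y, d (x + y) = d x + d y.
Hypothesis dM : forall x y, d (x * y) = d x * y + x * d y.

Lemma DiPsi i k : k != i -> (forall a, a != i -> d (L a) = 0) -> d (L i) = -1 ->
  d (Psi k) = - (Rr i k *+ M).
Proof.
move=> ki h0 h1; rewrite (Psi_split ki) !dM (dr_prod0 dM); last first.
  by move=> a /andP [ai _]; rewrite (dr_exp dM) h0 // mulr0 mul0rn.
rewrite !(dr_exp dM) h1 h0 // /Rr mulr0 mul0rn !mul0r !add0r mulr0 addr0.
rewrite -mulNrn; ring.
Qed.

Lemma TPsi i : (forall a, a != i -> d (L a) = 1) -> d (L i) = 0 ->
  d (Psi i) = (\sum_(j < n | j != i) Rr i j) *+ M.
Proof.
move=> h1 h0; rewrite /Psi dM (dr_exp dM) h0 mulr0 mul0rn mul0r add0r.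
rewrite (dr_prod dM) mulr_sumr -sumrMnl; apply: eq_bigr => j ji.
rewrite (dr_exp dM) h1 // mulr1 /Rr; ring.
Qed.

Lemma derivPhi : (forall a, d (L a) = 1) ->
  d (\prod_(a < n) L a ^+ M) = (\sum_k Psi k) *+ M.
Proof.
move=> h1; rewrite (dr_prod dM) -sumrMnl; apply: eq_bigr => j _.
rewrite (dr_exp dM) h1 mulr1 /Psi; ring.
Qed.
End Gen.


From HB Require Import structures.
From mathcomp Require Import all_boot all_order all_algebra.
From mathcomp Require Import mpoly.
From mathcomp Require Import ring.
Set Implicit Arguments.
Unset Strict Implicit.
Import GRing.Theory.
Local Open Scope ring_scope.

Section Main.
Variables (m n : nat).
Local Notation K := 'Z_m.
Local Notation A := {mpoly K[n]}.

Lemma omega_sum (J : 'I_n -> A) (i j k : 'I_n) : i != j ->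
  \sum_(c < n) (((Omega i j) k c)%:~R : K) *: J c =
  if k == i then J j - J i else if k == j then J i - J j else 0.
Proof.
move=> ij; rewrite (bigD1 i) // (bigD1 j) /=; last by rewrite eq_sym.
rewrite big1; last first.
  move=> c /andP [ci cj]; rewrite mxE.
  case: eqP => [->|_]; first by rewrite (negbTE ci) (negbTE cj) scale0r.
  by rewrite (negbTE ci) (negbTE cj) !andbF scale0r.
rewrite !mxE eqxx (negbTE ij) [j == i]eq_sym (negbTE ij) eqxx addr0.
have e1 : (1%:~R : K) = 1 by [].
have eN1 : ((-1)%:~R : K) = -1 by [].
case: (eqVneq k i) => [->|ki]; rewrite ?eqxx /=.
  by rewrite (negbTE ij) /= e1 eN1 scaleN1r scale1r addrC.
case: (k == j) => /=.
  by rewrite e1 eN1 scaleN1r scale1r.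
by rewrite !scale0r addr0.
Qed.

Hypothesis m1 : (1 < m)%N.

Lemma charA (x : A) k : (m %| k)%N -> x *+ k = 0.
Proof.
move=> /dvdnP [q ->]; rewrite mulrnA -mulr_natr -mpolyC_nat.
by rewrite (pchar_Zp m1) mpolyC0 mulr0.
Qed.

Variables (M N : nat).
Hypothesis M0 : (0 < M)%N.
Hypothesis hMm : (M.*2).+1 = m.
Hypothesis hN : (m %| N.+1)%N.

Local Notation LL := (@L K n).
Variable J : 'I_n -> A.
Hypothesis hJ : forall k, J k = (Psi LL M k)`_N.

Lemma inv2 : (2%:R : K)^-1 = - (M%:R).
Proof.
apply: mulr1_eq; rewrite mulrN -natrM mul2n.
have e := f_equal (fun t => (t%:R : K)) hMm.
move: e; rewrite /= (pchar_Zp m1) mulrS => /eqP; rewrite addr_eq0 => /eqP.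
by move=> <-.
Qed.

Lemma KZsum : \sum_(k < n) J k = 0.
Proof.
have h := derivPhi M (@derivM _) (@derivL K n).
have := f_equal (fun p : {poly A} => p`_N) h; rewrite coef_deriv charA // coefMn.
rewrite coef_sum -(eq_bigr _ (fun k _ => hJ k)) => /esym.
set x := \sum_(k < n) J k => hx.
have hd : (m %| (M.*2).+1)%N by rewrite hMm.
have := charA x hd; rewrite mulrS -muln2 mulrnA hx mul0rn addr0.
by [].
Qed.

Lemma omega_sum' (V : 'I_n -> A) (i j k : 'I_n) : j != i ->
  \sum_(c < n) (((Omega i j) k c)%:~R : K) *: V c =
  if k == i then V j - V i else if k == j then V i - V j else 0.
Proof. by move=> ji; apply: omega_sum; rewrite eq_sym. Qed.

Lemma Ldiff (a b : 'I_n) : LL a - LL b = ('X_b - 'X_a)%:P.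
Proof. by rewrite /L polyCB; ring. Qed.

Lemma JdiffR (i j : 'I_n) : j != i ->
  J j - J i = ('X_j - 'X_i) * (Rr LL M i j)`_N.
Proof.
move=> ji; rewrite !hJ -coefB (PsiRk LL M0 ji) (PsiRi LL M0 ji) -mulrBl.
by rewrite Ldiff coefCM.
Qed.

Lemma JD (i k : 'I_n) : (J k)^`M(i) = (Di i (Psi LL M k))`_N.
Proof. by rewrite hJ /Di coef_map. Qed.

Lemma KZeq (i k : 'I_n) :
  (\prod_(j < n | j != i) ('X_i - 'X_j)) * (J k)^`M(i) =
  ((2%:R : K)^-1) *: \sum_(j < n | j != i)
     (\prod_(q < n | (q != i) && (q != j)) ('X_i - 'X_q)) *
     \sum_(c < n) (((Omega i j) k c)%:~R : K) *: J c.
Proof.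
rewrite inv2.
have E : \sum_(j < n | j != i)
     (\prod_(q < n | (q != i) && (q != j)) ('X_i - 'X_q)) *
     \sum_(c < n) (((Omega i j) k c)%:~R : K) *: J c =
   \sum_(j < n | j != i)
     (\prod_(q < n | (q != i) && (q != j)) ('X_i - 'X_q)) *
     (if k == i then J j - J i else if k == j then J i - J j else 0).
  by apply: eq_bigr => j ji; rewrite (omega_sum' _ _ ji).
rewrite E.
rewrite JD scaleNr scaler_nat.
case: (eqVneq k i) => [->|ki].
  rewrite /=.
  have h1 : forall a, a != i -> T i (LL a) = 1.
    by move=> a ai; rewrite TL eq_sym ai mulr1n.
  have h0 : T i (LL i) = 0 by rewrite TL eqxx mulr0n.
  have hT := TPsi M (TM i) h1 h0.
  have hD : (Di i (Psi LL M i))`_N = (\sum_(j < n | j != i) (Rr LL M i j)`_N) *+ M.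
    move: (f_equal (fun p : {poly A} => p`_N) hT).
    by rewrite /T coefD coef_deriv charA // addr0 coefMn coef_sum.
  rewrite hD mulrnAr mulr_sumr -sumrMnl -mulNrn -sumrN -sumrMnl.
  apply: eq_bigr => j ji; rewrite JdiffR // (bigD1 j) //=; ring.
have h0 : forall a, a != i -> Di i (LL a) = 0.
  by move=> a ai; rewrite DiL eq_sym (negbTE ai) mulr0n polyC0 oppr0.
have h1 : Di i (LL i) = -1 by rewrite DiL eqxx mulr1n polyC1.
rewrite (DiPsi M (DiM i) ki h0 h1) (bigD1 k) //=.
have S : \sum_(j < n | j != i)
     (\prod_(q < n | (q != i) && (q != j)) ('X_i - 'X_q)) *
     (if k == j then J i - J j else 0) =
   (\prod_(q < n | (q != i) && (q != k)) ('X_i - 'X_q)) * (J i - J k).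
  rewrite (bigD1 k) //= eqxx -[RHS]addr0; congr (_ + _).
  by apply: big1 => j /andP [_ jk]; rewrite eq_sym (negbTE jk) mulr0.
rewrite S coefN coefMn JdiffR 1?eq_sym // Rr_sym; ring.
Qed.

End Main.

Lemma mapL (m n : nat) (a : 'I_n) :
  map_poly (@redmod m n) ('X - ('X_a)%:P) = @L 'Z_m n a.
Proof. by rewrite rmorphB /= map_polyX map_polyC /= /redmod map_mpolyX. Qed.

Lemma mapPhidiv (m n p s : nat) (k : 'I_n) :
  map_poly (@redmod m n) (Phi_div p s k) = Psi (@L 'Z_m n) (Mr p s) k.
Proof.
rewrite /Phi_div /Psi rmorphM rmorphXn rmorph_prod; congr (_ ^+ _ * _).
  exact: mapL.
by apply: eq_bigr => a _; rewrite rmorphXn; congr (_ ^+ _); exact: mapL.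
Qed.

Theorem theorem4p4 (p g : nat) :
  prime p -> odd p -> (1 <= g)%N -> (g.*2.+1 < p)%N ->
  forall s l : nat, (0 < s)%N -> (0 < l)%N ->
    KZ_sol_mod (p ^ s) (Ivec g.*2.+1 p s l).
Proof.
move=> pp op g1 gp s l s0 l0.
have p1 := prime_gt1 pp.
have m1 : (1 < p ^ s)%N by rewrite -(exp1n s) ltn_exp2r.
have om : odd (p ^ s) by rewrite ssrnat.oddX op orbT.
have hMm : (((Mr p s).*2).+1 = p ^ s)%N.
  have := odd_double_half (p ^ s).-1.
  have oe : odd (p ^ s).-1 = false.
    by move: om; rewrite -{1}(prednK (ltn_trans (ltn0Sn 0) m1)) /= => /negbTE.
  rewrite /Mr oe add0n => ->; rewrite prednK //.
  exact: (ltn_trans _ m1).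
have M0 : (0 < Mr p s)%N.
  have : (0 < (Mr p s).*2)%N by rewrite -ltnS hMm.
  by rewrite double_gt0.
have hN : (p ^ s %| (l * p ^ s).-1.+1)%N.
  by rewrite prednK ?dvdn_mull // muln_gt0 l0 expn_gt0 (ltn_trans _ p1).
have hJ : forall k, (fun k => redmod (p ^ s) (Ivec g.*2.+1 p s l k)) k =
   (Psi (@L 'Z_(p ^ s) g.*2.+1) (Mr p s) k)`_((l * p ^ s).-1)%N.
  by move=> k; rewrite /= /Ivec /Pcoef -mapPhidiv coef_map.
split.
  exact: (KZsum m1 hMm hN hJ).
move=> i k; exact: (KZeq m1 M0 hMm hN hJ).
Qed.
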